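(* Let $n\ge 2$. For a prime $p$, let $X_p$ be the set of matrices in $\mathrm{SL}(n,\mathbb{F}_p)$ whose characteristic polynomial has a monic factor over $\mathbb{F}_p$ of degree between $1$ and $n-1$ with constant term $1$. Then $|X_p|=o(p^{n^2-1})$ as $p\to\infty$. *)

(* Defs.v *)
From HB Require Import structures.
From mathcomp Require Import all_boot all_order all_algebra.
From mathcomp Require Import boolp.
Set Implicit Arguments. Unset Strict Implicit. Unset Printing Implicit Defensive.
Import GRing.Theory Num.Theory.
Local Open Scope ring_scope.

Definition has_unit_const_factor (n p : nat) (A : 'M['F_p]_n) : Prop :=
  exists q : {poly 'F_p},
    [/\ q \is monic, q %| char_poly A,
        (1 <= (size q).-1)%N, ((size q).-1 <= n.-1)%N & q`_0 = 1].

Definition Xp (n p : nat) : {set 'M['F_p]_n} :=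
  [set A : 'M['F_p]_n | (\det A == 1) && `[< has_unit_const_factor A >]].

(* Main.v *)
Require Import Defs.
From HB Require Import structures.
From mathcomp Require Import all_boot all_order all_algebra zify boolp.
Set Implicit Arguments. Unset Strict Implicit. Unset Printing Implicit Defensive.
Import Order.TTheory GRing.Theory Num.Theory.
Local Open Scope ring_scope.

Lemma char_poly_cast (R : comNzRingType) a b (e : a = b) (M : 'M[R]_a) :
  char_poly (castmx (e, e) M) = char_poly M.
Proof. by case: b / e; rewrite castmx_id. Qed.

Lemma char_poly_sim (R : comUnitRingType) k (P C : 'M[R]_k) : P \in unitmx ->
  char_poly (invmx P *m C *m P) = char_poly C.
Proof.
move=> Pu.
have h : char_poly_mx (invmx P *m C *m P) =
   map_mx polyC (invmx P) *m char_poly_mx C *m map_mx polyC P.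
  rewrite /char_poly_mx mulmxBr mulmxBl !map_mxM.
  congr (_ - _).
  rewrite mul_mx_scalar -scalemxAl -map_mxM mulVmx // map_mx1.
  idtac.
  by rewrite scalemx1.
rewrite /char_poly h !det_mulmx mulrC mulrA -det_mulmx -map_mxM mulmxV //.
by rewrite map_mx1 det1 mul1r.
Qed.


Section Fib.
Local Open Scope nat_scope.
Lemma fib_leq (T : finType) (A B : {set T}) (h : T -> T) : injective h ->
  (forall x, x \in A -> h x \in B) -> #|A| <= #|B|.
Proof.
move=> hi hAB; rewrite -(card_imset A hi); apply: subset_leq_card.
by apply/subsetP => y /imsetP [x xA ->]; apply: hAB.
Qed.

Lemma fib_card (T U : finType) (D : {set T}) (phi : T -> U) (V : {set U}) (v0 : U) :
  (forall x, x \in D -> phi x \in V) ->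
  (forall v, v \in V -> exists h : T -> T, exists h' : T -> T,
      [/\ injective h, injective h',
          (forall x, x \in D -> phi x = v0 -> h x \in D /\ phi (h x) = v) &
          (forall x, x \in D -> phi x = v -> h' x \in D /\ phi (h' x) = v0)]) ->
  #|D| = #|V| * #|[set x in D | phi x == v0]|.
Proof.
move=> DV hV.
have fib : forall v, v \in V -> #|[set x in D | phi x == v]| = #|[set x in D | phi x == v0]|.
  move=> v vV; have [h [h' [hi hi' H1 H2]]] := hV v vV.
  apply/eqP; rewrite eqn_leq; apply/andP; split.
    apply: (fib_leq hi') => x; rewrite !inE => /andP [xD /eqP px].
    by have [-> ->] := H2 x xD px; rewrite eqxx.
  apply: (fib_leq hi) => x; rewrite !inE => /andP [xD /eqP px].
  by have [-> ->] := H1 x xD px; rewrite eqxx.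
rewrite -sum1_card (partition_big phi (mem V)) /=; last by move=> x xD; apply: DV.
rewrite -sum_nat_const; apply: eq_bigr => v vV.
by rewrite -(fib v vV) sum1_card; apply: eq_card => x; rewrite !inE.
Qed.

End Fib.

Section Gen.
Variable F : finFieldType.
Variable m : nat.
Local Notation n := m.+1.

Definition comp (c : 'rV[F]_n) : 'M[F]_n :=
  \matrix_(i, j) if i.+1 == n then c 0 j else (i.+1 == j)%:R.

Definition pc (c : 'rV[F]_n) : {poly F} := 'X^n - \poly_(j < n) c 0 (inord j).

Lemma size_pc c : size (pc c) = n.+1.
Proof.
rewrite /pc size_polyDl ?size_polyXn //.
by rewrite size_polyN ltnS size_poly.
Qed.

Lemma pc_monic c : pc c \is monic.
Proof.
rewrite monicE /pc lead_coefDl ?lead_coefXn //.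
by rewrite size_polyN size_polyXn ltnS size_poly.
Qed.

Lemma coef_pc c (j : 'I_n) : (pc c)`_j = - c 0 j.
Proof.
rewrite /pc coefB coefXn coef_poly ltn_ord inord_val.
by rewrite (ltn_eqF (ltn_ord j)) sub0r.
Qed.

Lemma char_poly_comp c : char_poly (comp c) = pc c.
Proof.
have e : (size (pc c)).-1 = n by rewrite size_pc.
suff -> : comp c = castmx (e, e) (companionmx (pc c)).
  by rewrite char_poly_cast companionmxK // pc_monic.
apply/matrixP => i j; rewrite castmxE !mxE /=.
have -> : (size (pc c)).-1.-1 = m by rewrite size_pc.
have -> : (i.+1 == n) = (i == m :> nat) by [].
case: ifP => // _.
have -> : (pc c)`_j = (pc c)`_(j : 'I_n) by [].
by rewrite coef_pc opprK.
Qed.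

Lemma det_comp c : \det (comp c) = (-1) ^+ n * - c 0 0.
Proof.
have := char_poly_det (comp c); rewrite char_poly_comp.
have -> : (pc c)`_0 = (pc c)`_(@ord0 m) by [].
rewrite coef_pc => h.
have s : (-1) ^+ n * (-1) ^+ n = 1 :> F by rewrite -exprMn mulrNN mulr1 expr1n.
by rewrite (_ : c 0 0 = c 0 ord0) // h mulrA s mul1r.
Qed.
Definition e0 : 'rV[F]_n := delta_mx 0 0.

Lemma e0_comp_exp (c : 'rV[F]_n) (k : nat) (hk : (k < n)%N) :
  e0 *m comp c ^+ k = delta_mx 0 (Ordinal hk).
Proof.
elim: k hk => [|k IH] hk.
  rewrite expr0 mulmx1 /e0; congr delta_mx; exact: val_inj.
have hk' : (k < n)%N by apply: ltnW.
rewrite exprSr -mulmxE mulmxA IH; apply/rowP => j.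
rewrite -rowE !mxE /=.
have -> : (k.+1 == n) = false by apply/negbTE; rewrite neq_ltn hk.
by rewrite eq_sym.
Qed.

Definition cyc (P : 'M[F]_n) (c : 'rV[F]_n) := invmx P *m comp c *m P.

Lemma cyc_exp P c k : P \in unitmx -> cyc P c ^+ k = invmx P *m comp c ^+ k *m P.
Proof.
move=> Pu; elim: k => [|k IH]; first by rewrite !expr0 mulmx1 mulVmx.
rewrite exprSr IH exprSr -!mulmxE /cyc -!mulmxA; congr (_ *m _); congr (_ *m _).
by rewrite (mulmxA P) mulmxV // mul1mx.
Qed.

Lemma e0_cyc P c k (hk : (k < n)%N) : P \in unitmx -> row 0 P = e0 ->
  e0 *m cyc P c ^+ k = row (Ordinal hk) P.
Proof.
move=> Pu hP; rewrite cyc_exp // !mulmxA.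
have -> : e0 *m invmx P = e0.
  by rewrite -{1}hP rowE mulmxK.
by rewrite e0_comp_exp rowE.
Qed.

Lemma cyc_inj P1 c1 P2 c2 : P1 \in unitmx -> row 0 P1 = e0 ->
  P2 \in unitmx -> row 0 P2 = e0 -> cyc P1 c1 = cyc P2 c2 -> P1 = P2 /\ c1 = c2.
Proof.
move=> u1 h1 u2 h2 e.
have eP : P1 = P2.
  apply/row_matrixP => i.
  have -> : i = Ordinal (ltn_ord i) by apply: val_inj.
  by rewrite -(e0_cyc c1 (ltn_ord i) u1 h1) e (e0_cyc c2 (ltn_ord i) u2 h2).
split => //; subst P2.
have : comp c1 = comp c2.
  by move: e; rewrite /cyc => /(congr1 (mulmx P1)); rewrite !mulmxA !mulmxV // !mul1mx => /(congr1 (mulmx^~ (invmx P1))); rewrite !mulmxK.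
move=> ec; apply/rowP => j.
by move/matrixP: ec => /(_ ord_max j); rewrite !mxE /= eqxx.
Qed.
End Gen.

Definition huc (F : finFieldType) n (A : 'M[F]_n) : Prop :=
  exists q : {poly F},
    [/\ q \is monic, q %| char_poly A,
        (1 <= (size q).-1)%N, ((size q).-1 <= n.-1)%N & q`_0 = 1].

Section Tc.
Variable F : finFieldType.
Variable k : nat.
Local Notation n := k.+2.

Definition wf (w : 'rV[F]_k) (i : nat) : F :=
  if (insub i : option 'I_k) is Some j then w 0 j else 0.

Lemma wfE w i (h : (i < k)%N) : wf w i = w 0 (Ordinal h).
Proof. by rewrite /wf insubT. Qed.
Definition Qp (d : nat) (w : 'rV[F]_k) : {poly F} :=
  'X^d + \poly_(i < d) (if i == 0%N then 1 else wf w i.-1).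
Definition Rp (d : nat) (w : 'rV[F]_k) : {poly F} :=
  'X^(n - d) + \poly_(j < n - d) (if j == 0%N then (-1) ^+ n else wf w (d + j - 2)).
Definition Phi (x : 'I_n * 'rV[F]_k) : 'rV[F]_n :=
  \row_j - (Qp x.1 x.2 * Rp x.1 x.2)`_j.

Definition Tc := [set c : 'rV[F]_n | (\det (comp c) == 1) && `[< huc (comp c) >]].

Lemma Tc_sub : Tc \subset [set Phi x | x in [set: 'I_n * 'rV[F]_k]].
Proof.
apply/subsetP => c; rewrite inE => /andP [/eqP hdet /asboolP [q0 [q0m q0d d1 d2 q00]]].
rewrite char_poly_comp in q0d.
set d := (size q0).-1 in d1 d2.
have sq0 : size q0 = d.+1 by move: d1; rewrite /d; case: (size q0).
clearbody d.
set r0 := pc c %/ q0.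
have hf : r0 * q0 = pc c := divpK q0d.
have q0nz : q0 != 0 := monic_neq0 q0m.
have r0nz : r0 != 0.
  apply/negP => /eqP r0z; have := congr1 (fun p : {poly F} => size p) hf => /=; rewrite r0z mul0r.
  by rewrite size_pc size_poly0.
have sr0 : size r0 = (n - d).+1.
  have := congr1 (fun p : {poly F} => size p) hf => /=; rewrite size_mul // size_pc sq0.
  move: d2 => /=; move: (size r0) => sr; lia.
have lr0 : lead_coef r0 = 1.
  have := congr1 lead_coef hf; rewrite lead_coefM (monicP q0m) mulr1.
  by move=> ->; apply/monicP; apply: pc_monic.
have r00 : r0`_0 = (-1) ^+ n.
  have h0 : (pc c)`_0 = r0`_0.
    by rewrite -hf coefM big_ord1 subnn q00 mulr1.
  rewrite -h0 (_ : (pc c)`_0 = (pc c)`_(@ord0 k.+1)) // coef_pc.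
  move: hdet; rewrite det_comp (_ : c 0 0 = c 0 ord0) //.
  move: (- c 0 ord0) => x hx.
  have s : (-1) ^+ n * (-1) ^+ n = 1 :> F by rewrite -exprMn mulrNN mulr1 expr1n.
  transitivity (((-1) ^+ n * (-1) ^+ n) * x); first by rewrite s mul1r.
  by rewrite -mulrA hx mulr1.
have dn : (d < n)%N by move: d2 => /=; lia.
pose w : 'rV[F]_k := \row_(i < k) (if (i.+1 < d)%N then q0`_i.+1 else r0`_(i.+2 - d)).
have eQ : Qp d w = q0.
  apply/polyP => i; rewrite coefD coefXn coef_poly.
  case: (ltngtP i d) => hi.
  - rewrite add0r; case: eqP => [->|i0] //.
    have hik : (i.-1 < k)%N by move: d2 => /=; lia.
    rewrite (wfE w hik) mxE /=.
    have -> : (i.-1.+1 < d)%N by lia.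
    by rewrite prednK //; lia.
  - rewrite addr0 nth_default //.
    by rewrite sq0.
  - rewrite addr0 hi.
    by move/monicP: q0m; rewrite /lead_coef sq0 => ->.
have eR : Rp d w = r0.
  apply/polyP => j; rewrite coefD coefXn coef_poly.
  case: (ltngtP j (n - d)) => hj.
  - rewrite add0r; case: eqP => [->|j0] //.
    have hik : (d + j - 2 < k)%N by move: d2 => /=; lia.
    rewrite (wfE w hik) mxE /=.
    have -> : ((d + j - 2).+1 < d)%N = false by lia.
    congr (r0`_ _); lia.
  - rewrite addr0 nth_default //.
    by rewrite sr0.
  - rewrite addr0 hj.
    by move: lr0; rewrite /lead_coef sr0 => ->.
apply/imsetP; exists (Ordinal dn, w); first by rewrite inE.
apply/rowP => j; rewrite !mxE /= eQ eR mulrC hf coef_pc opprK //.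
Qed.

Lemma card_Tc : (#|Tc| <= n * #|F| ^ k)%N.
Proof.
apply: (leq_trans (subset_leq_card Tc_sub)); apply: (leq_trans (leq_imset_card _ _)).
by rewrite cardsT card_prod card_ord card_mx mul1n.
Qed.

End Tc.

Section Count.
Variable F : finFieldType.
Variable k : nat.
Local Notation n := k.+2.
Local Notation q := #|F|.
Local Notation E0 := (@e0 F k.+1).

Definition GLs := [set P : 'M[F]_n | P \in unitmx].
Definition SLs := [set P : 'M[F]_n | \det P == 1].
Definition PS := [set P in GLs | row 0 P == E0].
Definition Dc := [set c : 'rV[F]_n | c 0 0 == - (-1) ^+ n].
Definition XF := [set A : 'M[F]_n | (\det A == 1) && `[< huc A >]].
Definition Cyc := [set cyc x.1 x.2 | x in setX PS [set: 'rV[F]_n]].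

Lemma ex_g (u : 'rV[F]_n) : u != 0 -> exists2 g, g \in unitmx & E0 *m g = u.
Proof.
move=> unz.
have r1 : \rank u = 1%N by rewrite rank_rV unz.
have hu := mulmx_ebase u; rewrite r1 in hu.
set a := col_ebase u in hu; set R := row_ebase u in hu.
have au : a \in unitmx := col_ebase_unit u.
have a0 : a 0 0 \is a GRing.unit by rewrite unitmxE det_mx11 in au.
exists (a 0 0 *: R); first by rewrite unitmxZ // row_ebase_unit.
rewrite -scalemxAr -{}hu [a]mx11_scalar mul_scalar_mx -scalemxAl.
congr (_ *: _); first by rewrite mxE eqxx mulr1n.
congr (_ *m _); apply/matrixP => i j; rewrite [i]ord1 !mxE /= andbT.
by rewrite eq_sym -val_eqE.
Qed.

Lemma mulg_inj (g : 'M[F]_n) : g \in unitmx -> injective (fun P : 'M[F]_n => P *m g).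
Proof. by move=> gu; apply: (can_inj (g := fun P => P *m invmx g)) => P; rewrite mulmxK. Qed.

Lemma e0_nz : E0 != 0 :> 'rV[F]_n.
Proof.
apply/negP => /eqP /rowP /(_ 0); rewrite !mxE /= => /eqP.
by rewrite oner_eq0.
Qed.

Lemma card_GL_PS : #|GLs| = ((q ^ n).-1 * #|PS|)%N.
Proof.
have -> : (q ^ n).-1 = #|[set~ (0 : 'rV[F]_n)]|.
  by rewrite cardsC1 card_mx mul1n.
apply: (fib_card (phi := fun P => row 0 P)).
  move=> P; rewrite !inE => Pu; apply/negP => /eqP r0.
  have : E0 *m P = 0 by rewrite /e0 -rowE r0.
  move/(congr1 (mulmx^~ (invmx P))); rewrite mulmxK // mul0mx => /eqP.
  by rewrite (negbTE e0_nz).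
move=> v; rewrite !inE => vnz.
have [g gu hg] := ex_g vnz.
exists (fun P => P *m g), (fun P => P *m invmx g); split.
- exact: mulg_inj.
- by apply: mulg_inj; rewrite unitmx_inv.
- move=> P; rewrite !inE => Pu hP; rewrite unitmx_mul Pu gu; split => //.
  by rewrite row_mul hP.
- move=> P; rewrite !inE => Pu hP; rewrite unitmx_mul Pu unitmx_inv gu; split => //.
  by rewrite row_mul hP -hg mulmxK.
Qed.

Definition dg (v : F) : 'M[F]_n := diag_mx (\row_(i < n) (if i == 0 then v else 1)).

Lemma det_dg v : \det (dg v) = v.
Proof.
rewrite det_diag (bigD1 0) //= big1 ?mulr1; first by rewrite mxE eqxx.
by move=> i /negbTE i0; rewrite mxE i0.
Qed.

Lemma dg_unit v : v != 0 -> dg v \in unitmx.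
Proof. by move=> vnz; rewrite unitmxE det_dg unitfE. Qed.

Lemma card_GL_SL : #|GLs| = (q.-1 * #|SLs|)%N.
Proof.
have -> : #|SLs| = #|[set P in GLs | \det P == 1]|.
  apply: eq_card => P; rewrite !inE; case: eqP => h1; rewrite ?andbF ?andbT //.
  by rewrite unitmxE h1 unitr1.
have -> : q.-1 = #|[set~ (0 : F)]| by rewrite cardsC1.
apply: (fib_card (phi := fun P => \det P)).
  by move=> P; rewrite !inE unitmxE unitfE.
move=> v; rewrite !inE => vnz.
have gu := dg_unit vnz.
exists (fun P => P *m dg v), (fun P => P *m invmx (dg v)); split.
- exact: mulg_inj.
- by apply: mulg_inj; rewrite unitmx_inv.
- move=> P; rewrite !inE => Pu hP; rewrite unitmx_mul Pu gu; split => //.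
  by rewrite det_mulmx hP det_dg mul1r.
- move=> P; rewrite !inE => Pu hP; rewrite unitmx_mul Pu unitmx_inv gu; split => //.
  by rewrite det_mulmx hP det_inv det_dg mulfV.
Qed.

Lemma card_Dc : (q ^ n = q * #|Dc|)%N.
Proof.
have -> : #|Dc| = #|[set c in [set: 'rV[F]_n] | c 0 0 == - (-1) ^+ n]|.
  by apply: eq_card => c; rewrite !inE.
rewrite -{2}(cardsT F) -(fib_card (phi := fun c : 'rV[F]_n => c 0 0)).
- by rewrite cardsT card_mx mul1n.
- by move=> x; rewrite inE.
move=> v _.
exists (fun c => c + (v + (-1) ^+ n) *: E0), (fun c => c - (v + (-1) ^+ n) *: E0); split.
- exact: addIr.
- exact: addIr.
- move=> c _ hc; rewrite inE; split => //.
  by rewrite !mxE hc eqxx mulr1 addrCA addNr addr0.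
- move=> c _ hc; rewrite inE; split => //.
  by rewrite !mxE hc eqxx mulr1 opprD addrA subrr sub0r.
Qed.

Lemma det_cyc (P : 'M[F]_n) (c : 'rV[F]_n) : P \in unitmx -> \det (cyc P c) = \det (comp c).
Proof.
move=> Pu; rewrite /cyc !det_mulmx det_inv mulrC mulrA mulrV ?mul1r //.
Qed.

Lemma cyc_inj_on : {in setX PS [set: 'rV[F]_n] &, injective (fun x => cyc x.1 x.2)}.
Proof.
move=> [P1 c1] [P2 c2]; rewrite !inE /= => /andP [/andP [u1 /eqP h1] _] /andP [/andP [u2 /eqP h2] _] e.
by have [-> ->] := cyc_inj u1 h1 u2 h2 e.
Qed.

Lemma card_SLcyc : (#|PS| * #|Dc| <= #|SLs :&: Cyc|)%N.
Proof.
rewrite -cardsX -(card_in_imset (f := fun x => cyc x.1 x.2)); last first.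
  have sub : setX PS Dc \subset setX PS [set: 'rV[F]_n] by rewrite setXS ?subsetT.
  by move=> x y hx hy; apply: cyc_inj_on; apply: (subsetP sub).
apply: subset_leq_card; apply/subsetP => B /imsetP [[P c]]; rewrite !inE /= => /andP [/andP [Pu hP] hc] ->.
rewrite det_cyc // det_comp (eqP hc).
have -> : (-1) ^+ n * - - (-1) ^+ n = 1 :> F by rewrite opprK -exprMn mulrNN mulr1 expr1n.
rewrite eqxx /=.
by apply/imsetP; exists (P, c) => //; rewrite !inE Pu hP.
Qed.

Lemma card_Xcyc : (#|XF :&: Cyc| <= #|PS| * #|@Tc F k|)%N.
Proof.
rewrite -cardsX; apply: (leq_trans _ (leq_imset_card (fun x => cyc x.1 x.2) _)).
apply: subset_leq_card; apply/subsetP => B; rewrite !inE => /andP [/andP [hd /asboolP hh] /imsetP [[P c]]].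
rewrite !inE /= => /andP [/andP [Pu hP] _] eB.
apply/imsetP; exists (P, c) => //; rewrite !inE Pu hP /=.
rewrite eB det_cyc // in hd; rewrite hd /=; apply/asboolP.
move: hh; rewrite eB /huc char_poly_sim //.
Qed.

Lemma card_X : (#|XF| <= #|XF :&: Cyc| + #|SLs :\: Cyc|)%N.
Proof.
rewrite -(cardsID Cyc XF) leq_add2l; apply: subset_leq_card; apply/subsetP => B.
by rewrite !inE => /andP [-> /andP [-> _]].
Qed.

Local Open Scope nat_scope.
Lemma main_bound : (1 < q)%N -> (#|XF| <= 4 * n.+1 * q ^ (n * n - 2))%N.
Proof.
move=> q1.
set X := #|XF|; set A := #|PS|; set S := #|SLs|; set G := #|GLs|.
set Sc := #|SLs :&: Cyc|; set Sn := #|SLs :\: Cyc|; set T := #|@Tc F k|.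
set Xc := #|XF :&: Cyc|.
have q0 : (0 < q)%N by apply: ltnW.
have hDc : #|Dc| = q ^ k.+1.
  by apply/eqP; rewrite -(eqn_pmul2l q0) -card_Dc expnS.
have hSS : (Sc + Sn = S)%N by rewrite /Sc /Sn cardsID.
have hGA : G = ((q ^ n).-1 * A)%N := card_GL_PS.
have hGS : G = (q.-1 * S)%N := card_GL_SL.
have hSc : (A * q ^ k.+1 <= Sc)%N by rewrite -hDc card_SLcyc.
have hX : (X <= Xc + Sn)%N := card_X.
have hXc : (Xc <= A * T)%N := card_Xcyc.
have hT : (T <= n * q ^ k)%N := card_Tc F k.
have hG : (G <= q ^ (n * n))%N.
  by rewrite -(card_mx F n n) /G; apply: subset_leq_card; apply/subsetP.
have eQ : q ^ n = (q * q ^ k.+1)%N by rewrite expnS.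
have Qge : (q ^ k.+1 <= q ^ n)%N by rewrite eQ leq_pmull.
clearbody X A S G Sc Sn T Xc.
have h2 : (Sn * q.-1 <= A * q ^ k.+1)%N.
  have e1 : ((Sc + Sn) * q.-1 = (q ^ n).-1 * A)%N by rewrite hSS mulnC -hGS hGA.
  have e2 : (A * q ^ k.+1 * q.-1 <= Sc * q.-1)%N by apply: leq_mul.
  have e3 : (A * q ^ k.+1 * q.-1 + A * q ^ k.+1 = (q ^ n) * A)%N.
    by rewrite -mulnSr prednK // eQ; nia.
  have e4 : ((q ^ n).-1 * A <= q ^ n * A)%N by apply: leq_mul => //; apply: leq_pred.
  move: e1 e2 e3 e4; rewrite mulnDl; move: (Sc * q.-1)%N (Sn * q.-1)%N => a b.
  move: (A * q ^ k.+1 * q.-1)%N (A * q ^ k.+1)%N ((q ^ n).-1 * A)%N (q ^ n * A)%N.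
  move=> u v w z; lia.
have h3 : (X * q.-1 <= n.+1 * (A * q ^ k.+1))%N.
  apply: (leq_trans (leq_mul hX (leqnn q.-1))); rewrite mulnDl.
  apply: (leq_trans (leq_add (leq_mul (leq_trans hXc (leq_mul (leqnn A) hT)) (leqnn q.-1)) h2)).
  have -> : (A * (n * q ^ k) * q.-1 = n * (A * q ^ k * q.-1))%N by rewrite mulnCA !mulnA.
  have -> : (A * q ^ k.+1 = A * q ^ k * q)%N by rewrite expnSr mulnA.
  have := leq_pred q; move: (A * q ^ k) (q.-1) q => a r Q hr; nia.
have h5 : (X * q.-1 * (q ^ n).-1 <= n.+1 * q ^ k.+1 * q ^ (n * n))%N.
  apply: (leq_trans (leq_mul h3 (leqnn _))).
  move: hG; rewrite hGA; move: ((q ^ n).-1) (q ^ k.+1) (q ^ (n * n)) => u v W h.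
  have := leq_mul (leqnn (n.+1 * v)) h; nia.
have Q1 : (1 < q ^ n)%N by rewrite eQ (leq_trans q1) // leq_pmulr // expn_gt0 q0.
have h6 : (X * (q * q ^ n) <= 4 * (X * q.-1 * (q ^ n).-1))%N.
  have a1 : (q <= 2 * q.-1)%N by move: q1; lia.
  have a2 : (q ^ n <= 2 * (q ^ n).-1)%N by move: Q1; lia.
  have := leq_mul (leqnn X) (leq_mul a1 a2).
  move: ((q ^ n).-1) (q.-1) => s r; move: (q ^ n) => Q H; clear -H; nia.
have h7 : (X * q ^ 2 * q ^ k.+1 <= 4 * n.+1 * q ^ (n * n - 2) * q ^ 2 * q ^ k.+1)%N.
  have e5 : (X * q ^ 2 * q ^ k.+1 = X * (q * q ^ n))%N.
    rewrite -mulnn eQ; move: (q ^ k.+1) q => v Q; clear; nia.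
  have e6 : (4 * n.+1 * q ^ (n * n - 2) * q ^ 2 * q ^ k.+1 = 4 * (n.+1 * q ^ k.+1 * q ^ (n * n)))%N.
    have -> : (q ^ (n * n) = q ^ (n * n - 2) * q ^ 2)%N.
      by rewrite -expnD subnK //; move: (k) => t; clear; nia.
    move: (q ^ (n * n - 2)) (q ^ 2) (q ^ k.+1) => a b c; clear; nia.
  by rewrite e5 e6 (leq_trans h6) // leq_mul2l h5 orbT.
by move: h7; rewrite leq_pmul2r ?expn_gt0 ?q0 // leq_pmul2r ?expn_gt0 ?q0.
Qed.
End Count.

Lemma fin (n : nat) (hn : (2 <= n)%N) (eps : rat) (heps : 0 < eps) (X : nat -> nat)
  (hX : forall k p, n = k.+2 -> prime p -> (X p <= 4 * k.+3 * p ^ (k.+2 * k.+2 - 2))%N) :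
  exists P : nat, forall p : nat, prime p -> (P <= p)%N ->
    ((X p)%:R : rat) <= eps * (p ^ (n ^ 2 - 1))%:R.
Proof.
case: n hn hX => [|[|k]] // _ hX.
set c := (4 * k.+3)%N.
have hb := @archi_boundP rat (c%:R / eps) (divr_ge0 (ler0n _ _) (ltW heps)).
exists (Num.bound (c%:R / eps)) => p pp hp.
have := hX k p erefl pp => hXp.
have hE : (k.+2 ^ 2 - 1 = (k.+2 * k.+2 - 2).+1)%N by rewrite mulnn; lia.
rewrite hE expnS natrM mulrA.
apply: (le_trans (y := (c * p ^ (k.+2 * k.+2 - 2))%:R)); first by rewrite ler_nat.
rewrite natrM ler_wpM2r //.
have : c%:R / eps < p%:R by apply: (lt_le_trans hb); rewrite ler_nat.
by rewrite ltr_pdivrMr // mulrC => /ltW.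
Qed.

Theorem lemma6p1 (n : nat) (hn : (2 <= n)%N) (eps : rat) (heps : 0 < eps) :
  exists P : nat, forall p : nat, prime p -> (P <= p)%N ->
    (#|Xp n p|%:R : rat) <= eps * (p ^ (n ^ 2 - 1))%:R.
Proof.
apply: (fin hn heps (X := fun p => #|Xp n p|)) => k p -> pp.
have -> : Xp k.+2 p = @XF 'F_p k by [].
have := @main_bound 'F_p k; rewrite card_Fp //; apply.
exact: prime_gt1.
Qed.
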